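(* Let $\alpha,\beta>0$ with $\beta>\alpha$, set $\tau=(\beta-\alpha)^{-1}$, and let $S_0>0$, $I_0>0$. Let $(S(t),I(t),R(t))$ be the solution of $$\dot S=-\frac{\beta SI}{S+I},\qquad \dot I=\frac{\beta SI}{S+I}-\alpha I,\qquad \dot R=\alpha I$$ with $S(0)=S_0$, $I(0)=I_0$. Then $\dot I(0)>0$ if and only if $\frac{\beta}{\alpha}-1>\frac{I_0}{S_0}$. Moreover, $I$ attains its maximum (over all real $t$) at $$t_{\mathrm{peak}}=\tau\log\left(\frac{S_0}{I_0}\left(\frac{\beta}{\alpha}-1\right)\right),$$ which is positive if and only if $\frac{\beta}{\alpha}-1>\frac{I_0}{S_0}$, and $$I(t_{\mathrm{peak}})=S_0\left(\frac{\beta}{\alpha}-1\right)\left(\frac{\alpha}{\beta}\left(1+\frac{I_0}{S_0}\right)\right)^{\beta/(\beta-\alpha)}.$$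
   Context: Modified SIR epidemiological model with recovery rate $\alpha$ and transmission rate $\beta$; $S,I,R$ are fractions of susceptible, infective and removed individuals. *)

(* Defs.v *)
From Stdlib Require Import Reals.
From Coquelicot Require Import Coquelicot.
Open Scope R_scope.

Definition is_SIR_solution (alpha beta : R) (S I Rm : R -> R) : Prop :=
  forall t : R,
    is_derive S t (- (beta * S t * I t / (S t + I t))) /\
    is_derive I t (beta * S t * I t / (S t + I t) - alpha * I t) /\
    is_derive Rm t (alpha * I t).

(* Main.v *)
Require Import Defs.
From Stdlib Require Import Reals Lra Psatz Classical.
From Coquelicot Require Import Coquelicot.
Open Scope R_scope.

Lemma deriv_cont (f : R -> R) (x l : R) : is_derive f x l -> continuity_pt f x.
Proof.
  intro H. apply continuity_pt_filterlim. apply (ex_derive_continuous f x).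
  exists l; exact H.
Qed.

Lemma is_derive_eq (f : R -> R) (x l l2 : R) : is_derive f x l -> l = l2 -> is_derive f x l2.
Proof. intros H E; subst; exact H. Qed.

Lemma forward_ext (P : R -> Prop) :
  (forall T, 0 <= T -> (forall s, 0 <= s < T -> P s) ->
     exists d, 0 < d /\ forall s, 0 <= s < T + d -> P s) ->
  forall t, 0 <= t -> P t.
Proof.
  intros H t1 Ht1.
  apply NNPP; intro NP.
  set (E := fun t => 0 <= t /\ forall s, 0 <= s < t -> P s).
  assert (Hb : forall t, E t -> t <= t1).
  { intros t [Ht Hs]. destruct (Rle_dec t t1) as [h|h]; auto.
    exfalso; apply NP; apply Hs; lra. }
  assert (E0 : E 0). { split; [lra| intros s Hs; lra]. }
  destruct (completeness E) as [T [HT1 HT2]].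
  { exists t1; intros x Hx; apply Hb; auto. }
  { exists 0; auto. }
  assert (T0 : 0 <= T) by (apply HT1; auto).
  assert (HPT : forall s, 0 <= s < T -> P s).
  { intros s Hs. apply NNPP; intro Ns.
    assert (T <= s).
    { apply HT2. intros x [Hx Hxs]. destruct (Rle_dec x s) as [h|h]; auto.
      exfalso; apply Ns; apply Hxs; lra. }
    lra. }
  destruct (H T T0 HPT) as [d [Hd Hd2]].
  assert (E (T + d)) by (split; [lra| auto]).
  assert (T + d <= T) by (apply HT1; auto). lra.
Qed.

Lemma lim_eq_left f g b c : c < b -> continuity_pt f b -> continuity_pt g b ->
  (forall r, c < r < b -> f r = g r) -> f b = g b.
Proof.
  intros Hcb Hf Hg Heq.
  set (h := fun x => f x - g x).
  assert (Hh : continuity_pt h b) by (apply continuity_pt_minus; auto).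
  apply NNPP; intro N.
  assert (Hpos : 0 < Rabs (h b)) by (apply Rabs_pos_lt; unfold h; lra).
  destruct (Hh (Rabs (h b)) Hpos) as [alp [Ha Hal]].
  set (x := b - Rmin alp (b - c) / 2).
  assert (Hm1 : 0 < Rmin alp (b - c)) by (apply Rmin_pos; lra).
  assert (Hm2 : Rmin alp (b - c) <= alp) by apply Rmin_l.
  assert (Hm3 : Rmin alp (b - c) <= b - c) by apply Rmin_r.
  assert (Hx : h x = 0) by (unfold h; rewrite Heq; [ring| unfold x; lra]).
  specialize (Hal x). simpl in Hal. unfold R_dist, D_x, no_cond in Hal.
  rewrite Hx in Hal.
  assert (Rabs (0 - h b) < Rabs (h b)).
  { apply Hal. split; [split; [auto| unfold x; lra]|].
    rewrite Rabs_left; unfold x; lra. }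
  rewrite Rabs_minus_sym, Rminus_0_r in H. lra.
Qed.

Lemma lim_eq_right f g b c : b < c -> continuity_pt f b -> continuity_pt g b ->
  (forall r, b < r < c -> f r = g r) -> f b = g b.
Proof.
  intros Hcb Hf Hg Heq.
  set (h := fun x => f x - g x).
  assert (Hh : continuity_pt h b) by (apply continuity_pt_minus; auto).
  apply NNPP; intro N.
  assert (Hpos : 0 < Rabs (h b)) by (apply Rabs_pos_lt; unfold h; lra).
  destruct (Hh (Rabs (h b)) Hpos) as [alp [Ha Hal]].
  set (x := b + Rmin alp (c - b) / 2).
  assert (Hm1 : 0 < Rmin alp (c - b)) by (apply Rmin_pos; lra).
  assert (Hm2 : Rmin alp (c - b) <= alp) by apply Rmin_l.
  assert (Hm3 : Rmin alp (c - b) <= c - b) by apply Rmin_r.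
  assert (Hx : h x = 0) by (unfold h; rewrite Heq; [ring| unfold x; lra]).
  specialize (Hal x). simpl in Hal. unfold R_dist, D_x, no_cond in Hal.
  rewrite Hx in Hal.
  assert (Rabs (0 - h b) < Rabs (h b)).
  { apply Hal. split; [split; [auto| unfold x; lra]|].
    rewrite Rabs_right; unfold x; lra. }
  rewrite Rabs_minus_sym, Rminus_0_r in H. lra.
Qed.

Lemma open_pos f b : continuity_pt f b -> 0 < f b ->
  exists d, 0 < d /\ forall s, Rabs (s - b) < d -> 0 < f s.
Proof.
  intros Hf Hb.
  destruct (Hf (f b) Hb) as [alp [Ha Hal]].
  exists alp; split; auto. intros s Hs.
  destruct (Req_dec s b) as [->|Hne]; auto.
  specialize (Hal s). simpl in Hal. unfold R_dist, D_x, no_cond in Hal.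
  assert (Rabs (f s - f b) < f b) by (apply Hal; repeat split; auto).
  apply Rabs_def2 in H. lra.
Qed.

Theorem mainTheorem2 (alpha beta S0 I0 : R) (S I Rm : R -> R) :
  0 < alpha -> 0 < beta -> alpha < beta -> 0 < S0 -> 0 < I0 ->
  is_SIR_solution alpha beta S I Rm ->
  S 0 = S0 -> I 0 = I0 ->
  let tau := / (beta - alpha) in
  let tpeak := tau * ln (S0 / I0 * (beta / alpha - 1)) in
  (Derive I 0 > 0 <-> beta / alpha - 1 > I0 / S0) /\
  (forall t : R, I t <= I tpeak) /\
  (0 < tpeak <-> beta / alpha - 1 > I0 / S0) /\
  I tpeak = S0 * (beta / alpha - 1) *
            Rpower (alpha / beta * (1 + I0 / S0)) (beta / (beta - alpha)).
Proof.
  intros Ha Hb Hab HS0 HI0 Hsol HS HI tau tpeak.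
  set (k := beta - alpha).
  assert (Hk : 0 < k) by (unfold k; lra).
  set (u0 := I0 / S0).
  assert (Hu0 : 0 < u0) by (unfold u0; apply Rdiv_lt_0_compat; lra).
  set (p := beta / k).
  set (W0 := ln S0 + p * ln (1 + u0)).
  set (u := fun t => u0 * exp (k * t)).
  assert (Hu : forall t, 0 < u t) by (intro t; unfold u; apply Rmult_lt_0_compat; [lra| apply exp_pos]).
  set (Se := fun t => exp (W0 - p * ln (1 + u t))).
  set (Ie := fun t => u t * Se t).
  assert (HSe : forall t, 0 < Se t) by (intro; apply exp_pos).
  assert (HIe : forall t, 0 < Ie t) by (intro; apply Rmult_lt_0_compat; auto).
  assert (cSe : forall t, continuity_pt Se t).
  { intro t. apply (deriv_cont _ _ (- p * (u0 * k * exp (k * t)) / (1 + u0 * exp (k*t)) * Se t)).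
    unfold Se, u. auto_derive.
    - pose proof (exp_pos (k*t)). nra.
    - unfold Se, Rminus. pose proof (exp_pos (k*t)). field. nra. }
  assert (cIe : forall t, continuity_pt Ie t).
  { intro t. apply continuity_pt_mult; auto. unfold u.
    apply (deriv_cont _ _ (u0 * (k * exp (k*t)))). auto_derive; auto. ring. }
  set (P := fun t => 0 < S t /\ 0 < I t).
  assert (dV : forall r, P r -> is_derive (fun t => I t / S t * exp (- (k * t))) r 0).
  { intros r [Sr Ir]. destruct (Hsol r) as [dS [dI _]].
    eapply is_derive_eq.
    - apply (is_derive_mult (fun t => I t / S t) (fun t => exp (- (k*t)))).
      + apply is_derive_div; [exact dI| exact dS| lra].
      + evar (l : R). assert (is_derive (fun t => exp (- (k * t))) r l).
        { auto_derive; auto. unfold l. reflexivity. }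
        exact H.
      + intros; apply Rmult_comm.
    - simpl. unfold plus, mult; simpl. unfold k. field. lra. }
  assert (dW : forall r, P r -> is_derive (fun t => ln (S t) + p * ln (1 + I t / S t)) r 0).
  { intros r [Sr Ir]. destruct (Hsol r) as [dS [dI _]].
    assert (Hq : 0 < 1 + I r / S r).
    { assert (0 < I r / S r) by (apply Rdiv_lt_0_compat; auto). lra. }
    eapply is_derive_eq.
    - apply (is_derive_plus (fun t => ln (S t)) (fun t => p * ln (1 + I t / S t))).
      + apply (is_derive_comp ln S). apply is_derive_ln; auto. exact dS.
      + apply is_derive_scal. apply (is_derive_comp ln (fun t => 1 + I t / S t)).
        apply is_derive_ln; auto.
        apply (is_derive_plus (fun _ => 1) (fun t => I t / S t)).
        apply is_derive_const.
        apply is_derive_div; [exact dI| exact dS| lra].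
    - simpl. unfold plus, scal, mult, zero; simpl. unfold mult; simpl. unfold p, k.
      field. repeat split; lra. }
  assert (core : forall s, (forall r, Rmin 0 s <= r <= Rmax 0 s -> P r) -> S s = Se s /\ I s = Ie s).
  { intros s HP.
    assert (Ps : P s) by (apply HP; split; [apply Rmin_r| apply Rmax_r]).
    destruct Ps as [Ss Is].
    destruct (MVT_gen (fun t => I t / S t * exp (- (k * t))) 0 s (fun _ => 0)) as [c1 [_ Hc1]].
    { intros x Hx. apply dV, HP; lra. }
    { intros x Hx. eapply deriv_cont. apply dV, HP; lra. }
    destruct (MVT_gen (fun t => ln (S t) + p * ln (1 + I t / S t)) 0 s (fun _ => 0)) as [c2 [_ Hc2]].
    { intros x Hx. apply dW, HP; lra. }
    { intros x Hx. eapply deriv_cont. apply dW, HP; lra. }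
    simpl in Hc1, Hc2. rewrite HS, HI in Hc1, Hc2.
    replace (- (k * 0)) with 0 in Hc1 by ring. rewrite exp_0 in Hc1.
    assert (Hq : I s / S s = u s).
    { unfold u. assert (E : exp (- (k * s)) * exp (k * s) = 1).
      { rewrite <- exp_plus. replace (- (k * s) + k * s) with 0 by ring. apply exp_0. }
      fold u0 in Hc1.
      replace (I s / S s) with (I s / S s * exp (- (k * s)) * exp (k * s)) by (rewrite Rmult_assoc, E; ring).
      replace (I s / S s * exp (- (k * s))) with u0 by lra. reflexivity. }
    assert (HSs : S s = Se s).
    { rewrite Hq in Hc2. fold u0 in Hc2. unfold Se. rewrite <- (exp_ln (S s)) by auto.
      f_equal. unfold W0. lra. }
    split; auto. unfold Ie. rewrite <- HSs, <- Hq. field. lra. }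
  assert (cS : forall t, continuity_pt S t).
  { intro t; destruct (Hsol t) as [dS _]; eapply deriv_cont; exact dS. }
  assert (cI : forall t, continuity_pt I t).
  { intro t; destruct (Hsol t) as [_ [dI _]]; eapply deriv_cont; exact dI. }
  assert (closeP : forall b, (forall r, Rmin 0 b <= r <= Rmax 0 b -> r <> b -> P r) -> P b).
  { intros b Hbb.
    destruct (Rtotal_order b 0) as [Hlt|[Heq|Hgt]].
    - assert (Hm : Rmin 0 b = b) by (apply Rmin_right; lra).
      assert (HM : Rmax 0 b = 0) by (apply Rmax_left; lra).
      rewrite Hm, HM in Hbb.
      assert (E : forall r, b < r < 0 -> S r = Se r /\ I r = Ie r).
      { intros r Hr. apply core. intros r' Hr'.
        rewrite Rmin_right in Hr' by lra. rewrite Rmax_left in Hr' by lra.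
        apply Hbb; lra. }
      split.
      + rewrite (lim_eq_right S Se b 0); auto. intros; apply E; auto.
      + rewrite (lim_eq_right I Ie b 0); auto. intros; apply E; auto.
    - subst b. split; lra.
    - assert (Hm : Rmin 0 b = 0) by (apply Rmin_left; lra).
      assert (HM : Rmax 0 b = b) by (apply Rmax_right; lra).
      rewrite Hm, HM in Hbb.
      assert (E : forall r, 0 < r < b -> S r = Se r /\ I r = Ie r).
      { intros r Hr. apply core. intros r' Hr'.
        rewrite Rmin_left in Hr' by lra. rewrite Rmax_right in Hr' by lra.
        apply Hbb; lra. }
      split.
      + rewrite (lim_eq_left S Se b 0); auto. intros; apply E; auto.
      + rewrite (lim_eq_left I Ie b 0); auto. intros; apply E; auto. }
  assert (openP : forall b, P b -> exists d, 0 < d /\ forall s, Rabs (s - b) < d -> P s).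
  { intros b [Sb Ib].
    destruct (open_pos S b (cS b) Sb) as [d1 [Hd1 H1]].
    destruct (open_pos I b (cI b) Ib) as [d2 [Hd2 H2]].
    exists (Rmin d1 d2). split; [apply Rmin_pos; auto|].
    intros s Hs. pose proof (Rmin_l d1 d2). pose proof (Rmin_r d1 d2).
    split; [apply H1| apply H2]; lra. }
  assert (allP : forall t, P t).
  { assert (Fw : forall t, 0 <= t -> P t).
    { apply forward_ext. intros T HT HPT.
      assert (PT : P T).
      { apply closeP. rewrite Rmin_left, Rmax_right by lra. intros r Hr Hne. apply HPT; lra. }
      destruct (openP T PT) as [d [Hd Hd2]]. exists d; split; auto.
      intros s Hs. destruct (Rlt_dec s T); [apply HPT; lra|].
      apply Hd2. rewrite Rabs_right; lra. }
    assert (Bw : forall t, 0 <= t -> P (- t)).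
    { apply (forward_ext (fun t => P (- t))). intros T HT HPT.
      assert (PT : P (- T)).
      { apply closeP. rewrite Rmin_right, Rmax_left by lra. intros r Hr Hne.
        rewrite <- (Ropp_involutive r). apply HPT; lra. }
      destruct (openP (- T) PT) as [d [Hd Hd2]]. exists d; split; auto.
      intros s Hs. destruct (Rlt_dec s T); [apply HPT; lra|].
      apply Hd2. rewrite Rabs_left1; lra. }
    intro t. destruct (Rle_dec 0 t); [apply Fw; lra|].
    rewrite <- (Ropp_involutive t). apply Bw; lra. }
  assert (allE : forall t, S t = Se t /\ I t = Ie t).
  { intro t. apply core. intros; apply allP. }
  set (xs := beta / alpha - 1).
  assert (Hxs : 0 < xs).
  { unfold xs. apply Rlt_Rminus. apply (Rmult_lt_reg_r alpha); auto. field_simplify; lra. }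
  set (X := S0 / I0 * xs).
  assert (HX : 0 < X) by (unfold X; apply Rmult_lt_0_compat; auto; apply Rdiv_lt_0_compat; auto).
  assert (Htp : tpeak = / k * ln X) by reflexivity.
  assert (Hutp : u tpeak = xs).
  { unfold u. rewrite Htp. replace (k * (/ k * ln X)) with (ln X) by (field; lra).
    rewrite exp_ln by auto. unfold u0, X. field. lra. }
  assert (Huc : forall c, u c = xs * exp (k * (c - tpeak))).
  { intro c. rewrite <- Hutp. unfold u. rewrite Rmult_assoc, <- exp_plus. f_equal. f_equal. ring. }
  assert (Hequiv : xs > u0 <-> beta * S0 - alpha * (S0 + I0) > 0).
  { unfold xs, u0. split; intro H.
    - assert (beta / alpha - 1 - I0 / S0 > 0) by lra.
      replace (beta / alpha - 1 - I0 / S0) with ((beta * S0 - alpha * (S0 + I0)) / (alpha * S0)) in H0 by (field; lra).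
      assert (0 < alpha * S0) by nra.
      apply (Rmult_lt_reg_r (/ (alpha * S0))). apply Rinv_0_lt_compat; auto. lra.
    - assert (((beta * S0 - alpha * (S0 + I0)) / (alpha * S0)) > 0).
      { apply Rdiv_lt_0_compat; nra. }
      replace ((beta * S0 - alpha * (S0 + I0)) / (alpha * S0)) with (beta / alpha - 1 - I0 / S0) in H0 by (field; lra).
      lra. }
  split; [|split; [|split]].
  - destruct (Hsol 0) as [_ [dI _]]. rewrite (is_derive_unique _ _ _ dI). rewrite HS, HI.
    fold u0. fold xs. rewrite Hequiv.
    replace (beta * S0 * I0 / (S0 + I0) - alpha * I0) with (I0 / (S0 + I0) * (beta * S0 - alpha * (S0 + I0))) by (field; lra).
    assert (0 < I0 / (S0 + I0)) by (apply Rdiv_lt_0_compat; lra).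
    split; intro H1; [| apply Rmult_lt_0_compat; lra].
    apply NNPP; intro N. assert (beta * S0 - alpha * (S0 + I0) <= 0) by lra.
    assert (I0 / (S0 + I0) * (beta * S0 - alpha * (S0 + I0)) <= 0).
    { nra. }
    lra.
  - intro t.
    destruct (MVT_gen I t tpeak (fun c => beta * S c * I c / (S c + I c) - alpha * I c)) as [c [Hc Hmvt]].
    { intros x _. destruct (Hsol x) as [_ [dI _]]. exact dI. }
    { intros x _. apply cI. }
    assert (Hd : beta * S c * I c / (S c + I c) - alpha * I c
                 = u c * Se c * k * (1 - exp (k * (c - tpeak))) / (1 + u c)).
    { destruct (allE c) as [E1 E2]. rewrite E1, E2. unfold Ie.
      assert (E3 : k - alpha * u c = k * (1 - exp (k * (c - tpeak)))).
      { rewrite Huc. unfold xs, k. field. lra. }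
      pose proof (Hu c). pose proof (HSe c).
      transitivity (u c * Se c * (k - alpha * u c) / (1 + u c)).
      + unfold k. field. split; nra.
      + rewrite E3. field. lra. }
    rewrite Hd in Hmvt.
    pose proof (Hu c). pose proof (HSe c).
    assert (Hpos : 0 < u c * Se c * k / (1 + u c)).
    { apply Rdiv_lt_0_compat; [|lra]. apply Rmult_lt_0_compat; [apply Rmult_lt_0_compat|]; assumption. }
    destruct (Rle_dec t tpeak) as [Ht|Ht].
    + rewrite Rmax_right in Hc by lra.
      assert (exp (k * (c - tpeak)) <= 1).
      { rewrite <- exp_0. destruct (Req_dec c tpeak) as [->|Hne].
        - replace (k * (tpeak - tpeak)) with 0 by ring. lra.
        - left. apply exp_increasing. nra. }
      assert (0 <= u c * Se c * k * (1 - exp (k * (c - tpeak))) / (1 + u c) * (tpeak - t)).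
      { replace (u c * Se c * k * (1 - exp (k * (c - tpeak))) / (1 + u c) * (tpeak - t))
          with (u c * Se c * k / (1 + u c) * ((1 - exp (k * (c - tpeak))) * (tpeak - t))) by (field; lra).
        apply Rmult_le_pos; [lra|]. apply Rmult_le_pos; lra. }
      lra.
    + rewrite Rmin_right in Hc by lra.
      assert (exp (k * (c - tpeak)) >= 1).
      { rewrite <- exp_0. destruct (Req_dec c tpeak) as [->|Hne].
        - replace (k * (tpeak - tpeak)) with 0 by ring. lra.
        - left. apply exp_increasing. nra. }
      assert (0 <= u c * Se c * k * (1 - exp (k * (c - tpeak))) / (1 + u c) * (tpeak - t)).
      { replace (u c * Se c * k * (1 - exp (k * (c - tpeak))) / (1 + u c) * (tpeak - t))
          with (u c * Se c * k / (1 + u c) * ((exp (k * (c - tpeak)) - 1) * (t - tpeak))) by (field; lra).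
        apply Rmult_le_pos; [lra|]. apply Rmult_le_pos; lra. }
      lra.
  - fold xs u0. rewrite Htp.
    assert (HXu : X * u0 = xs) by (unfold X, u0; field; lra).
    assert (Hik : 0 < / k) by (apply Rinv_0_lt_compat; auto).
    split; intro H.
    + assert (Hl : 0 < ln X).
      { apply NNPP; intro N. assert (/ k * ln X <= 0) by nra. lra. }
      rewrite <- ln_1 in Hl. apply ln_lt_inv in Hl; [|lra|auto]. nra.
    + apply Rmult_lt_0_compat; auto. rewrite <- ln_1. apply ln_increasing; [lra|]. nra.
  - destruct (allE tpeak) as [_ E]. rewrite E. unfold Ie. rewrite Hutp. unfold Se. rewrite Hutp.
    unfold Rpower.
    assert (E1 : 1 + xs = beta / alpha) by (unfold xs; ring).
    assert (E2 : alpha / beta * (1 + u0) = / (beta / alpha) * (1 + u0)) by (field; lra).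
    assert (Hba : 0 < beta / alpha) by (apply Rdiv_lt_0_compat; lra).
    rewrite E1, E2, ln_mult, ln_Rinv; try lra.
    2: apply Rinv_0_lt_compat; lra.
    replace (beta / (beta - alpha)) with p by reflexivity.
    unfold W0. replace (ln S0 + p * ln (1 + u0) - p * ln (beta / alpha))
      with (ln S0 + p * (- ln (beta / alpha) + ln (1 + u0))) by ring.
    rewrite exp_plus, exp_ln by lra. ring.
Qed.
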